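(* For integers $r\ge1$, $n\ge0$, the set \[ S_n=\left\{\mathbf{a}\in\mathbb{Z}^r \;\middle|\; a_1\ge0,\ldots,a_r\ge0,\ \sum_{i=1}^r a_i\le n\right\} \] is integrally-poised for polynomials of degree $n$.
   Context: A numerical (integer-valued) polynomial is a polynomial $f\in\mathbb{Q}[x_1,\ldots,x_r]$ with $f(\mathbf{x})\in\mathbb{Z}$ for all $\mathbf{x}\in\mathbb{Z}^r$. A subset $S\subseteq\mathbb{Z}^r$ is integrally-poised for polynomials of degree $n$ if there exists a family of numerical polynomials $\{c_{\mathbf{a}}\}_{\mathbf{a}\in S}$ such that $f(\mathbf{x})=\sum_{\mathbf{a}\in S}c_{\mathbf{a}}(\mathbf{x})f(\mathbf{a})$ for all polynomials $f$ of degree $n$ and all $\mathbf{x}\in\mathbb{Z}^r$. *)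

(* Defs.v *)
From HB Require Import structures.
From mathcomp Require Import all_boot all_order all_algebra.
From mathcomp Require Import mpoly.
Set Implicit Arguments. Unset Strict Implicit. Unset Printing Implicit Defensive.
Import Order.TTheory GRing.Theory Num.Theory.
Local Open Scope ring_scope.

Definition zpt (r : nat) (x : 'I_r -> int) : 'I_r -> rat := fun i => (x i)%:~R.

Definition numerical (r : nat) (p : {mpoly rat[r]}) : Prop :=
  forall x : 'I_r -> int, exists z : int, p.@[zpt x] = z%:~R.

Definition integrally_poised (r n : nat) (S : seq {ffun 'I_r -> int}) : Prop :=
  exists c : {ffun 'I_r -> int} -> {mpoly rat[r]},
    (forall a, a \in S -> numerical (c a)) /\
    forall f : {mpoly rat[r]}, (msize f <= n.+1)%N ->
      forall x : 'I_r -> int,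
        f.@[zpt x] = \sum_(a <- undup S) (c a).@[zpt x] * f.@[zpt a].

Arguments integrally_poised : clear implicits.

(* S_n = { a in Z^r | a_i >= 0, sum_i a_i <= n }. Every such a has 0 <= a_i <= n,
   so it is enumerated from {ffun 'I_r -> 'I_(n.+1)}. *)
Definition simplex_pts (r n : nat) : seq {ffun 'I_r -> int} :=
  map (fun a : {ffun 'I_r -> 'I_n.+1} => [ffun i => ((a i : nat)%:Z)])
    (filter (fun a : {ffun 'I_r -> 'I_n.+1} => (\sum_(i < r) (a i : nat) <= n)%N)
       (enum {ffun 'I_r -> 'I_n.+1})).

(* Main.v *)
Require Import Defs.
From mathcomp Require Import all_boot all_order all_algebra.
From mathcomp Require Import mpoly.
From mathcomp Require Import ring.
Set Implicit Arguments. Unset Strict Implicit. Unset Printing Implicit Defensive.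
Import Order.TTheory GRing.Theory Num.Theory.
Local Open Scope ring_scope.
Definition wc (k j : nat) : rat := (-1) ^+ (k - j) * ('C(k, j))%:R.
Definition Dd (k e : nat) : rat := \sum_(j < k.+1) wc k j * (j%:R) ^+ e.
Fixpoint Bv (k : nat) (x : rat) : rat :=
  if k is k'.+1 then Bv k' x * (x - k'%:R) / (k'.+1)%:R else 1.

Lemma Dd_0 k : Dd k.+1 0 = 0.
Proof.
transitivity ((-1 + 1 : rat) ^+ k.+1); last by rewrite addNr expr0n.
rewrite exprDn /Dd; apply: eq_bigr => j _.
by rewrite /wc expr1n !mulr1 mulr_natr.
Qed.

Lemma Dd_rec k e : Dd k.+1 e.+1 = k.+1%:R * (Dd k.+1 e + Dd k e).
Proof.
have -> : Dd k e = \sum_(j < k.+2) wc k j * (j%:R) ^+ e.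
  by rewrite big_ord_recr /= /wc bin_small // mulr0 mul0r addr0.
rewrite /Dd -big_split mulr_sumr; apply: eq_bigr => j _ /=.
have hj : (j <= k.+1)%N by rewrite -ltnS.
have H : (k.+1%:R - j%:R) * ('C(k.+1, j))%:R = k.+1%:R * ('C(k, j))%:R :> rat.
  by rewrite -natrB // -!natrM -mul_bin_down.
have [jle|jgt] := leqP j k.
  rewrite /wc subSn // exprS.
  set s := (-1) ^+ (k - j) : rat.
  apply/eqP; rewrite -subr_eq0; apply/eqP.
  transitivity (s * (j%:R) ^+ e * ((k.+1%:R - j%:R) * ('C(k.+1, j))%:R - k.+1%:R * ('C(k, j))%:R)).
    by rewrite exprS; ring.
  by rewrite H subrr mulr0.
have -> : nat_of_ord j = k.+1 by apply/eqP; rewrite eqn_leq hj jgt.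
by rewrite /wc (bin_small (ltnSn k)) binn subnn expr0 !mul1r mulr0 mul0r addr0 exprS.
Qed.

Lemma Dd_vanish e k : (e < k)%N -> Dd k e = 0.
Proof.
elim: e k => [|e IH] [|k] //= hk; first exact: Dd_0.
by rewrite Dd_rec !IH ?addr0 ?mulr0 // ltnW.
Qed.

Lemma Dd0S e : Dd 0 e.+1 = 0.
Proof. by rewrite /Dd big_ord1 /= expr0n mulr0. Qed.

Lemma xBv k x : x * Bv k x = k.+1%:R * Bv k.+1 x + k%:R * Bv k x.
Proof.
rewrite /=. field. by rewrite addrC natr1 pnatr_eq0.
Qed.

Lemma newton e N x : (e < N)%N -> x ^+ e = \sum_(k < N) Dd k e * Bv k x.
Proof.
elim: e N => [|e IH] [|N] //= hN.
  rewrite big_ord_recl /= big1 ?addr0.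
    by rewrite /Dd big_ord1 /wc /= expr0 !mul1r.
  by move=> i _; rewrite Dd_0 mul0r.
rewrite exprS (IH N hN) mulr_sumr big_ord_recl /= Dd0S mul0r add0r.
under eq_bigr do rewrite mulrCA xBv mulrDr.
under [in RHS]eq_bigr do rewrite Dd_rec mulrDr mulrDl.
rewrite !big_split /= [in RHS]addrC; congr (_ + _).
  by apply: eq_bigr => i _; rewrite ?add0n; ring.
set G := fun k : nat => k%:R * Dd k e * Bv k x.
transitivity (\sum_(i < N) G i); first by apply: eq_bigr => i _; rewrite /G; ring.
transitivity (\sum_(i < N) G i.+1); last by apply: eq_bigr => i _; rewrite /G /= ?add0n; ring.
have E1 := @big_ord_recl _ 0 +%R N (fun i : 'I_N.+1 => G i).
have E2 := @big_ord_recr _ 0 +%R N (fun i : 'I_N.+1 => G i).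
have G0 : G 0%N = 0 by rewrite /G !mul0r.
have GN : G N = 0 by rewrite /G Dd_vanish // mulr0 mul0r.
move: E1 E2 => /= E1 E2.
rewrite GN addr0 in E2; rewrite G0 add0r in E1.
by rewrite -E2 E1.
Qed.

Lemma Bv_nat n k : Bv k n%:R = ('C(n, k))%:R.
Proof.
elim: k => [|k IH] /=; first by rewrite bin0.
rewrite IH; have [le|lt] := leqP k n.
  have Hr : (n%:R - k%:R) * ('C(n, k))%:R = ('C(n, k.+1))%:R * k.+1%:R :> rat.
    by rewrite -natrB // -!natrM -mul_bin_left mulnC.
  by rewrite [_ * (_ - _)]mulrC Hr mulfK // pnatr_eq0.
by rewrite !bin_small ?mul0r // ltnW.
Qed.

Lemma Bv_neg n k : Bv k (- (n.+1)%:R) = (-1) ^+ k * ('C(n + k, k))%:R.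
Proof.
elim: k => [|k IH] /=; first by rewrite bin0 expr0 mulr1.
rewrite IH.
have Hr : ((n + k).+1)%:R * ('C(n + k, k))%:R = ('C(n + k.+1, k.+1))%:R * k.+1%:R :> rat.
  by rewrite -!natrM addnS mul_bin_diag mulnC.
transitivity ((-1) ^+ k.+1 * (((n + k).+1)%:R * ('C(n + k, k))%:R / k.+1%:R) : rat).
  rewrite exprS -addSn natrD; ring.
by rewrite Hr mulfK // pnatr_eq0.
Qed.

Definition isint (q : rat) := exists z : int, q = z%:~R.

Lemma Bv_int k (z : int) : isint (Bv k z%:~R).
Proof.
case: z => n.
  by exists ('C(n, k))%:Z; rewrite Bv_nat.
exists ((-1) ^+ k * ('C(n + k, k))%:Z).
by rewrite NegzE intrN Bv_neg intrM intr_sign.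
Qed.

Lemma isint_sum (I : Type) (s : seq I) (P : pred I) (F : I -> rat) :
  (forall i, P i -> isint (F i)) -> isint (\sum_(i <- s | P i) F i).
Proof.
move=> H; apply: (big_ind isint); first by exists 0.
  by move=> x y [a ->] [b ->]; exists (a + b); rewrite intrD.
exact: H.
Qed.

Lemma isint_prod (I : Type) (s : seq I) (P : pred I) (F : I -> rat) :
  (forall i, P i -> isint (F i)) -> isint (\prod_(i <- s | P i) F i).
Proof.
move=> H; apply: (big_ind isint); first by exists 1.
  by move=> x y [a ->] [b ->]; exists (a * b); rewrite intrM.
exact: H.
Qed.

Lemma wc_int k j : isint (wc k j).
Proof. by exists ((-1) ^+ (k - j) * ('C(k, j))%:Z); rewrite intrM intr_sign. Qed.

Fixpoint mB r (i : 'I_r) (k : nat) : {mpoly rat[r]} :=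
  if k is k'.+1 then mB i k' * ('X_i - (k'%:R)%:MP) * ((k'.+1%:R)^-1)%:MP else 1.

Lemma mB_eval r (i : 'I_r) k v : (mB i k).@[v] = Bv k (v i).
Proof.
elim: k => [|k IH] /=; first by rewrite meval1.
by rewrite !mevalM mevalB mevalXU !mevalC IH.
Qed.

Definition Pn r n (u : {ffun 'I_r -> 'I_n.+1}) := (\sum_i (u i : nat) <= n)%N.

Definition cc r n (a : {ffun 'I_r -> int}) : {mpoly rat[r]} :=
  \sum_(u : {ffun 'I_r -> 'I_n.+1} | Pn u)
     (\prod_i wc (u i) `|a i|%N) *: \prod_i mB i (u i).

Lemma cc_eval r n a v : (@cc r n a).@[v] =
  \sum_(u : {ffun 'I_r -> 'I_n.+1} | Pn u)
     (\prod_i wc (u i) `|a i|%N) * \prod_i Bv (u i) (v i).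
Proof.
rewrite /cc raddf_sum; apply: eq_bigr => u _.
rewrite /= mevalZ rmorph_prod; congr (_ * _); apply: eq_bigr => i _.
exact: mB_eval.
Qed.

Lemma cc_num r n a : numerical (@cc r n a).
Proof.
move=> x; have : isint (@cc r n a).@[zpt x].
  rewrite cc_eval; apply: isint_sum => u _.
  have [z1 ->] : isint (\prod_i wc (u i) `|a i|%N).
    by apply: isint_prod => i _; exact: wc_int.
  have [z2 ->] : isint (\prod_i Bv (u i) (zpt x i)).
    by apply: isint_prod => i _; exact: Bv_int.
  by exists (z1 * z2); rewrite intrM.
by case=> z ->; exists z.
Qed.

Lemma drop_filter r n (h : 'I_r -> 'I_n.+1 -> rat) (b : 'I_r -> nat) :
  (\sum_i b i <= n)%N -> (forall i (k : 'I_n.+1), (b i < k)%N -> h i k = 0) ->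
  \sum_(u : {ffun 'I_r -> 'I_n.+1} | Pn u) \prod_i h i (u i)
  = \sum_(u : {ffun 'I_r -> 'I_n.+1}) \prod_i h i (u i).
Proof.
move=> hb h0; rewrite [RHS](bigID (@Pn r n)) /= [X in _ + X]big1 ?addr0 // => u hu.
case: (boolP [exists i, (b i < u i)%N]) => [/existsP [i hi]|].
  by rewrite (bigD1 i) //= h0 // mul0r.
rewrite negb_exists => /forallP hall.
case/negP: hu; rewrite /Pn; apply: leq_trans hb; apply: leq_sum => i _.
by rewrite leqNgt hall.
Qed.

Lemma Dd_ext n k e : (k <= n)%N ->
  \sum_(j < n.+1) wc k j * (j%:R) ^+ e = Dd k e.
Proof.
move=> hk; rewrite /Dd (@big_ord_widen _ 0 +%R k.+1 n.+1 (fun j => wc k j * (j%:R) ^+ e)) //.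
rewrite [RHS]big_mkcond; apply: eq_bigr => j _; case: ifP => // hj.
by rewrite /wc bin_small ?mulr0 ?mul0r // ltnNge -ltnS hj.
Qed.

Lemma simplex_uniq r n : uniq (simplex_pts r n).
Proof.
rewrite /simplex_pts map_inj_uniq; first by apply: filter_uniq; apply: enum_uniq.
move=> t1 t2 /ffunP H.
apply/ffunP => i; move: (H i); rewrite !ffunE => -[] /val_inj //.
Qed.

Lemma key r n (m : 'X_{1..r}) (v : 'I_r -> rat) : (mdeg m <= n)%N ->
  \prod_i v i ^+ m i =
  \sum_(a <- undup (simplex_pts r n)) (@cc r n a).@[v] * \prod_i (zpt a i) ^+ m i.
Proof.
move=> hm; rewrite undup_id ?simplex_uniq // /simplex_pts big_map big_filter big_enum_cond /=.
symmetry.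
pose A (u t : {ffun 'I_r -> 'I_n.+1}) := \prod_i wc (u i) (t i).
pose Bu (u : {ffun 'I_r -> 'I_n.+1}) := \prod_i Bv (u i) (v i).
pose T (t : {ffun 'I_r -> 'I_n.+1}) := \prod_i ((t i : nat)%:R : rat) ^+ m i.
transitivity (\sum_(t : {ffun 'I_r -> 'I_n.+1} | Pn t) (\sum_(u : {ffun 'I_r -> 'I_n.+1} | Pn u) A u t * Bu u) * T t).
  apply: eq_big => [t|t _] //.
  rewrite cc_eval; congr (_ * _).
    apply: eq_bigr => u _; congr (_ * _); apply: eq_bigr => i _; by rewrite ffunE.
  by apply: eq_bigr => i _; rewrite /zpt ffunE.
transitivity (\sum_(u : {ffun 'I_r -> 'I_n.+1} | Pn u) Bu u * \prod_i Dd (u i) (m i)).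
  under eq_bigr do rewrite mulr_suml.
  rewrite exchange_big /=; apply: eq_bigr => u hu.
  transitivity (Bu u * \sum_(t : {ffun 'I_r -> 'I_n.+1} | Pn t) \prod_i (wc (u i) (t i) * ((t i : nat)%:R) ^+ m i)).
    rewrite mulr_sumr; apply: eq_bigr => t _.
    by rewrite /A /T [in RHS]big_split /=; ring.
  congr (_ * _).
  rewrite (@drop_filter r n (fun i (j : 'I_n.+1) => wc (u i) j * ((j : nat)%:R) ^+ m i) (fun i => u i)) //.
    transitivity (\prod_i \sum_(j : 'I_n.+1) wc (u i) j * ((j : nat)%:R) ^+ m i).
      by rewrite bigA_distr_bigA.
    apply: eq_bigr => i _.
    by apply: Dd_ext; rewrite -ltnS.
  by move=> i k hk; rewrite /wc bin_small // mulr0 mul0r.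
transitivity (\sum_(u : {ffun 'I_r -> 'I_n.+1} | Pn u) \prod_i (Dd (u i) (m i) * Bv (u i) (v i))).
  by apply: eq_bigr => u _; rewrite big_split /= mulrC.
have hmi : forall i, (m i <= n)%N.
  by move=> i; apply: leq_trans hm; rewrite mdegE (bigD1 i) //= leq_addr.
have E := @drop_filter r n (fun i (k : 'I_n.+1) => Dd k (m i) * Bv k (v i)) (fun i => m i).
rewrite /= in E; rewrite E.
- transitivity (\prod_i \sum_(k : 'I_n.+1) Dd k (m i) * Bv k (v i)).
    by rewrite bigA_distr_bigA.
  apply: eq_bigr => i _.
  by rewrite (newton _ (_ : (m i < n.+1)%N)) // ltnS hmi.
- by rewrite -mdegE.
- by move=> i k hk; rewrite Dd_vanish // mul0r.
Qed.

Theorem proposition3p3 (r n : nat) (hr : (1 <= r)%N) :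
  integrally_poised r n (simplex_pts r n).
Proof.
exists (@cc r n); split; first by move=> a _; exact: cc_num.
move=> f hf x; rewrite [LHS]mevalE.
under [RHS]eq_bigr do rewrite mevalE mulr_sumr.
rewrite exchange_big /= big_seq [RHS]big_seq; apply: eq_bigr => m hm.
have hd : (mdeg m <= n)%N.
  by rewrite -ltnS; apply: leq_trans hf; exact: msize_mdeg_lt.
rewrite (key (zpt x) hd) mulr_sumr; apply: eq_bigr => a _.
by rewrite mulrCA.
Qed.
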